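(* Suppose $w=w_1w_2\cdots w_n$ and $\tilde w=\tilde w_1\tilde w_2\cdots\tilde w_n$ are reduced words with $\tilde w_i-w_i\in\{0,1\}$ for all $i\in[n]$. Then $Q_{\mathsf{EG}}(w)=Q_{\mathsf{EG}}(\tilde w)$.
   Context: $S_\mathbb{Z}$ is the group of finitely supported permutations of $\mathbb{Z}$ with generators $s_i=(i,i+1)$; a reduced word (for some $\sigma\in S_\mathbb{Z}$) is a minimal-length word $i_1\cdots i_l$ with $\sigma=s_{i_1}\cdots s_{i_l}$. Tableaux are fillings of Young diagrams of partitions (French notation, rows numbered bottom to top). Edelman–Greene insertion of a reduced word $w=w_1\cdots w_n$: starting from the empty tableau, insert $w_1,\dots,w_n$ in turn, each starting in the first row; when $x$ is inserted into a row, let $y$ be the smallest entry in the row with $x\le y$; if none exists, $x$ is added to the end of the row; if $x=y$ the row is unchanged and $y+1$ is inserted into the next row; if $x<y$, $y$ is replaced by $x$ and $y$ is inserted into the next row. $Q_{\mathsf{EG}}(w)$ is the tableau of the resulting shape with entry $i$ in the box added when inserting $w_i$. *)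

(* Defs.v *)
From mathcomp Require Import all_boot all_order all_algebra.
Set Implicit Arguments. Unset Strict Implicit. Unset Printing Implicit Defensive.
Import Order.TTheory GRing.Theory Num.Theory.
Local Open Scope ring_scope.

Definition stransp (i : int) (x : int) : int :=
  if x == i then i + 1 else if x == i + 1 then i else x.

Definition perm_of_word (w : seq int) : int -> int :=
  foldr (fun i f => fun x => stransp i (f x)) id w.

Definition same_perm (v w : seq int) : Prop :=
  forall x : int, perm_of_word v x = perm_of_word w x.

Definition reduced_word (w : seq int) : Prop :=
  forall v : seq int, same_perm v w -> (size w <= size v)%N.

(* Tableaux: list of rows, row 0 = bottom row (French notation). *)
(* Edelman–Greene insertion of x into tableau P, starting at the first row.
   Returns the new tableau and the (0-based) index of the row where a box
   was added. *)
Fixpoint eg_insert (x : int) (P : seq (seq int)) : seq (seq int) * nat :=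
  match P with
  | [::] => ([:: [:: x]], 0%N)
  | r :: rs =>
      let j := find (fun y => x <= y) r in
      if j == size r then (rcons r x :: rs, 0%N)
      else
        let y := nth 0 r j in
        if x == y then
          let: (P', k) := eg_insert (y + 1) rs in (r :: P', k.+1)
        else
          let: (P', k) := eg_insert y rs in (set_nth 0 r j x :: P', k.+1)
  end.

Definition add_box (Q : seq (seq nat)) (k : nat) (i : nat) : seq (seq nat) :=
  if (k < size Q)%N then set_nth [::] Q k (rcons (nth [::] Q k) i)
  else rcons Q [:: i].

Definition eg_step (PQ : seq (seq int) * seq (seq nat)) (iw : nat * int)
  : seq (seq int) * seq (seq nat) :=
  let: (P, Q) := PQ in
  let: (P', k) := eg_insert iw.2 P in (P', add_box Q k iw.1).

(* Q_EG(w): entry i (1-based) in the box added when inserting w_i. *)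
Definition Q_EG (w : seq int) : seq (seq nat) :=
  (foldl eg_step ([::], [::]) (zip (iota 1 (size w)) w)).2.

(* Main.v *)
Require Import Defs.
From mathcomp Require Import all_boot all_order all_algebra zify.
Import Order.TTheory GRing.Theory Num.Theory.
Local Open Scope ring_scope.

Lemma stransp_cases i x : (x = i /\ stransp i x = i+1) \/ (x = i+1 /\ stransp i x = i)
  \/ (x <> i /\ x <> i+1 /\ stransp i x = x).
Proof.
rewrite /stransp; case: eqP => h; first by left.
case: eqP => h'; first by right; left.
by right; right.
Qed.

Ltac st_go := repeat match goal with |- context [stransp ?i ?x] =>
  lazymatch x with context [stransp _ _] => fail | _ =>
   let H := fresh in
   have [[? H]|[[? H]|[? [? H]]]] := stransp_cases i x; rewrite H end end; lia.
Ltac st_solve i j x := st_go.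

Lemma st_comm i j x : (i + 2 <= j) || (j + 2 <= i) ->
  stransp i (stransp j x) = stransp j (stransp i x).
Proof. move=> h; st_solve i j x. Qed.

Lemma st_invol i x : stransp i (stransp i x) = x.
Proof. st_solve i (i+1) x. Qed.

Lemma st_braid i x : stransp i (stransp (i+1) (stransp i x)) =
  stransp (i+1) (stransp i (stransp (i+1) x)).
Proof. st_solve i (i+1) x. Qed.

Lemma pw_cat a b x : perm_of_word (a ++ b) x = perm_of_word a (perm_of_word b x).
Proof. by elim: a => [|i a IH] //=; rewrite IH. Qed.

Lemma red_factor a b c : reduced_word (a ++ b ++ c) -> reduced_word b.
Proof.
move=> h v hv; have := h (a ++ v ++ c).
rewrite !size_cat leq_add2l leq_add2r; apply => x.
by rewrite !pw_cat hv.
Qed.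

Lemma red_same v w : same_perm v w -> size v = size w -> reduced_word w -> reduced_word v.
Proof. move=> hs hz h u hu; rewrite hz; apply: h => x; by rewrite hu hs. Qed.

Lemma not_red_xx a x c : ~ reduced_word (a ++ x :: x :: c).
Proof.
move=> h; have := h (a ++ c).
rewrite !size_cat /=.
have -> : (size a + (size c).+2 <= size a + size c)%N = false.
  by apply/negbTE; rewrite -ltnNge ltn_add2l.
move=> H; apply/notF/H => z; by rewrite !pw_cat /= st_invol.
Qed.

Lemma pw_cons i a x : perm_of_word (i :: a) x = stransp i (perm_of_word a x).
Proof. by []. Qed.

Lemma comm_past (x : int) (s : seq int) : all (fun z => (x + 2 <= z) || (z + 2 <= x)) s ->
  same_perm (s ++ [:: x]) (x :: s).
Proof.
elim: s => [|z s IH] //= /andP [hz hs] y.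
by rewrite !pw_cons (IH hs) pw_cons st_comm // orbC.
Qed.
Fixpoint rowins (x : int) (r : seq int) : option int * seq int :=
  match r with
  | [::] => (None, [:: x])
  | y :: r0 => if x <= y then (if x == y then (Some (y + 1), r) else (Some y, x :: r0))
               else ((rowins x r0).1, y :: (rowins x r0).2)
  end.

Fixpoint goodrow (x : int) (r : seq int) : bool :=
  match r with
  | [::] => true
  | y :: r0 => if x <= y then (if x == y then (if r0 is z :: _ then z == x + 1 else false) else true)
               else goodrow x r0
  end.

Fixpoint goodins (x : int) (P : seq (seq int)) : bool :=
  match P with
  | [::] => true
  | r :: rs => goodrow x r && (if (rowins x r).1 is Some b then goodins b rs else true)
  end.

Fixpoint rd (P : seq (seq int)) : seq int :=
  match P with [::] => [::] | r :: rs => rd rs ++ r end.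

Definition ob2s (o : option int) : seq int := if o is Some b then [:: b] else [::].

Lemma rowins_find x r : rowins x r =
  if find (fun y => x <= y) r == size r then (None, rcons r x)
  else let y := nth 0 r (find (fun y => x <= y) r) in
    if x == y then (Some (y+1), r) else (Some y, set_nth 0 r (find (fun y => x <= y) r) x).
Proof.
elim: r => [|y r IH] //=. case: ifP => hxy //=.
by rewrite eqSS IH; case: ifP => _ //=; case: ifP => _ //=.
Qed.

Lemma eg_insert_cons x r rs : eg_insert x (r :: rs) =
  match (rowins x r).1 with
  | None => ((rowins x r).2 :: rs, 0%N)
  | Some b => ((rowins x r).2 :: (eg_insert b rs).1, (eg_insert b rs).2.+1)
  end.
Proof.
rewrite /= rowins_find. case: ifP => //= _.
by case: ifP => _ /=; case: (eg_insert _ rs).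
Qed.

Lemma rowins_size x r : (size (ob2s (rowins x r).1) + size (rowins x r).2 = (size r).+1)%N.
Proof.
elim: r => [|y r IH] //=; case: ifP => _; first by case: ifP.
by rewrite /= -IH addnS.
Qed.

Lemma rowins_all (P : pred int) x r : P x -> all P r -> all P (rowins x r).2.
Proof.
move=> hx; elim: r => [|y r IH] /=; first by rewrite hx.
case/andP => hy hr; case: ifP => _; first case: ifP => _.
- by rewrite /= hy hr.
- by rewrite /= hx hr.
by rewrite /= hy IH.
Qed.

Definition ltz (a b : int) := a < b.

Lemma ltz_trans : transitive ltz.
Proof. by move=> a b c; rewrite /ltz; apply: lt_trans. Qed.

Lemma sorted_cons y (s : seq int) : sorted ltz (y :: s) = all (ltz y) s && sorted ltz s.
Proof. by rewrite /= path_sortedE //; move=> a b c; rewrite /ltz; apply: lt_trans. Qed.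

Lemma row_step x r : sorted ltz r -> reduced_word (r ++ [:: x]) ->
  [/\ goodrow x r, sorted ltz (rowins x r).2,
      same_perm (ob2s (rowins x r).1 ++ (rowins x r).2) (r ++ [:: x]) &
      forall c, (rowins x r).1 = Some c -> x + 1 <= c].
Proof.
elim: r => [|y r0 IH]; first by move=> _ _; split.
rewrite sorted_cons => /andP [hy hs] hred /=.
case: ifP => hxy.
  case: ifP => hxe.
    have exy : x = y by apply/eqP.
    subst y.
    case: r0 IH hy hs hred => [|z r1] IH hy hs hred.
      by exfalso; apply: (@not_red_xx [::] x [::]).
    move: hy; rewrite /= => /andP [hz hr1].
    move: hs; rewrite sorted_cons => /andP [hz1 hs1].
    have hall : all (fun t => (x + 2 <= t) || (t + 2 <= x)) r1.
      apply/allP => t ht; have := allP hz1 t ht; have := allP hr1 t ht.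
      rewrite /ltz; move: hz => /=; rewrite /ltz. lia.
    case: eqP => hz2.
    - subst z. split => //.
      + by rewrite hz (path_sortedE ltz_trans) hz1 hs1.
      + move=> t; rewrite !pw_cons (comm_past _ _ hall t) pw_cons.
        by rewrite st_braid.
      + by move=> c [<-].
    - exfalso.
      have hall2 : all (fun t => (x + 2 <= t) || (t + 2 <= x)) (z :: r1).
        rewrite /= hall andbT; move: hz hz2; rewrite /ltz; lia.
      apply: (@not_red_xx [::] x (z :: r1)).
      apply: (red_same _ _ _ _ hred) => /=.
        move=> t; rewrite !pw_cons; congr stransp.
        rewrite (comm_past _ _ hall t) pw_cons st_comm //.
        move: hz hz2; rewrite /ltz; lia.
      by rewrite size_cat addn1.
  have hall : all (fun t => (x + 2 <= t) || (t + 2 <= x)) r0.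
    apply/allP => t ht; have := allP hy t ht; move: hxy hxe; rewrite /ltz; lia.
  split => //.
  - rewrite sorted_cons hs andbT; apply/allP => t ht; have := allP hy t ht.
    move: hxy hxe; rewrite /ltz; lia.
  - by move=> t; rewrite !pw_cons (comm_past _ _ hall t).
  - move=> c [<-]; move: hxy hxe; lia.
have hr : reduced_word (r0 ++ [:: x]).
  by apply: (red_factor [:: y] _ [::]); rewrite cats0.
case: (IH hs hr) => g1 g2 g3 g4.
split => //.
- rewrite sorted_cons g2 andbT; apply: rowins_all => //.
  by move: hxy; rewrite /ltz; lia.
- move=> t; rewrite pw_cons -(g3 t).
  move: g4; case: (rowins x r0) => [[c|] r'] g4 //=.
  rewrite ?pw_cons st_comm //.
  have := g4 c erefl; move: hxy; lia.
Qed.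

Lemma same_perm_catl a v w : same_perm v w -> same_perm (a ++ v) (a ++ w).
Proof. by move=> h t; rewrite !pw_cat h. Qed.

Lemma same_perm_catr a v w : same_perm v w -> same_perm (v ++ a) (w ++ a).
Proof. by move=> h t; rewrite !pw_cat h. Qed.

Lemma same_perm_mid a s u v : same_perm u v -> same_perm (a ++ u ++ s) (a ++ v ++ s).
Proof. by move=> h t; rewrite !pw_cat h. Qed.

Lemma rd_cons r rs : rd (r :: rs) = rd rs ++ r.
Proof. by []. Qed.

Lemma tab_step P x s : all (sorted ltz) P -> reduced_word (rd P ++ x :: s) ->
  [/\ goodins x P, all (sorted ltz) (eg_insert x P).1,
      same_perm (rd (eg_insert x P).1 ++ s) (rd P ++ x :: s) &
      size (rd (eg_insert x P).1) = (size (rd P)).+1].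
Proof.
elim: P x s => [|r rs IH] x s.
  by move=> _ _; split.
move=> /andP [hr hrs]; rewrite rd_cons -catA => hred.
have e : r ++ x :: s = (r ++ [:: x]) ++ s by rewrite -catA.
have hrow : reduced_word (r ++ [:: x]).
  by apply: (red_factor (rd rs) _ s); rewrite -e.
case: (row_step x r hr hrow) => g1 g2 g3 g4.
rewrite eg_insert_cons [goodins _ _]/=.
have hsz := rowins_size x r.
move: g1 g2 g3 g4 hsz; case: (rowins x r) => [[c|] r'] g1 g2 g3 g4 hsz.
- have hred2 : reduced_word (rd rs ++ c :: r' ++ s).
    apply: (red_same _ _ _ _ hred).
      rewrite e; exact: (same_perm_mid _ _ _ _ g3).
    rewrite !size_cat /= size_cat /=; move: hsz => /=; lia.
  case: (IH c (r' ++ s) hrs hred2) => h1 h2 h3 h4.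
  split.
  + by rewrite g1.
  + by apply/andP; split.
  + move=> t; rewrite !rd_cons -!catA (h3 t) e.
    exact: (same_perm_mid _ _ _ _ g3 t).
  + rewrite !rd_cons !size_cat h4; move: hsz => /=; lia.
- split.
  + by rewrite g1.
  + by apply/andP; split.
  + move=> t; rewrite !rd_cons -!catA e.
    exact: (same_perm_mid _ _ _ _ g3 t).
  + rewrite !rd_cons !size_cat; move: hsz => /=; lia.
Qed.

Definition dd (a b : int) : bool := (b - a == 0) || (b - a == 1).

Lemma row_cmp r rt x xt : all2 dd r rt -> dd x xt -> goodrow x r -> goodrow xt rt ->
  all2 dd (rowins x r).2 (rowins xt rt).2 &&
  match (rowins x r).1, (rowins xt rt).1 with
  | None, None => true | Some c, Some ct => dd c ct | _, _ => false end.
Proof.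
elim: r rt => [|y r0 IH] [|yt rt0] //=.
  by move=> _ hx _ _; rewrite hx.
move=> /andP [hy hr] hx g gt.
move: g gt; case hxy: (x <= y); case hxyt: (xt <= yt).
- case ex: (x == y); case ext: (xt == yt) => _ _ /=; rewrite ?hr ?andbT;
    move: hx hy hxy hxyt ex ext; rewrite /dd; lia.
- case ex: (x == y); last by move: hx hy hxy hxyt ex; rewrite /dd; lia.
  case: r0 hr IH => [|z r1] //; case: rt0 => [|zt rt1] //= /andP [hz hr1] _ g _.
  case: ifP => h1; [case: ifP => h2|] => /=; rewrite ?hr1 ?andbT;
    move: hx hy hxy hxyt ex hz g h1; rewrite /dd; lia.
- case ext: (xt == yt); last by move: hx hy hxy hxyt ext; rewrite /dd; lia.
  case: rt0 hr IH => [|zt rt1] //.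
  case: r0 => [|z r1] //= /andP [hz hr1] _ _ gt.
  case: ifP => h1; [case: ifP => h2|] => /=; rewrite ?hr1 ?andbT;
    move: hx hy hxy hxyt ext hz gt h1; rewrite /dd; lia.
- move=> g gt; rewrite /= hy /=; exact: IH.
Qed.

Lemma tab_cmp P Pt x xt : all2 (all2 dd) P Pt -> dd x xt -> goodins x P -> goodins xt Pt ->
  ((eg_insert x P).2 == (eg_insert xt Pt).2) &&
  all2 (all2 dd) (eg_insert x P).1 (eg_insert xt Pt).1.
Proof.
elim: P Pt x xt => [|r rs IH] [|rt rts] x xt //.
  by move=> _ hx _ _; rewrite /= hx.
move=> /andP [hr hrs] hx /andP [g1 g2] /andP [gt1 gt2].
rewrite !eg_insert_cons.
have := row_cmp r rt x xt hr hx g1 gt1.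
move: g2 gt2; case: (rowins x r) => [[c|] r']; case: (rowins xt rt) => [[ct|] rt'] //=
  g2 gt2 /andP [hrr hc] //.
- case/andP: (IH rts c ct hrs hc g2 gt2) => /eqP -> h.
  by apply/andP; split => //=; apply/andP; split.
- by apply/andP; split => //=; apply/andP; split.
Qed.

Definition pd (a b : nat * int) : bool := (a.1 == b.1) && dd a.2 b.2.

Lemma foldl_cons' (T R : Type) (f : R -> T -> R) z a l : foldl f z (a :: l) = foldl f (f z a) l.
Proof. by []. Qed.

Lemma eg_step_eq P Q i x : eg_step (P, Q) (i, x) = ((eg_insert x P).1, add_box Q (eg_insert x P).2 i).
Proof. by rewrite /eg_step; case: (eg_insert x P). Qed.

Lemma main_gen l lt P Pt Q : all2 pd l lt -> all2 (all2 dd) P Pt ->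
  all (sorted ltz) P -> all (sorted ltz) Pt ->
  reduced_word (rd P ++ unzip2 l) -> reduced_word (rd Pt ++ unzip2 lt) ->
  (foldl eg_step (P, Q) l).2 = (foldl eg_step (Pt, Q) lt).2.
Proof.
elim: l lt P Pt Q => [|[i x] l IH] [|[it xt] lt] P Pt Q //.
move=> /andP [/andP [/eqP ei hx] hl] hP sP sPt rP rPt.
rewrite /= in ei; subst it.
have [g1 g2 g3 g4] := tab_step P x (unzip2 l) sP rP.
have [h1 h2 h3 h4] := tab_step Pt xt (unzip2 lt) sPt rPt.
case/andP: (tab_cmp P Pt x xt hP hx g1 h1) => /eqP ek hPP.
rewrite !foldl_cons' !eg_step_eq ek.
apply: IH => //.
- apply: (red_same _ _ _ _ rP) => //.
  by rewrite !size_cat g4 /= addnS.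
- apply: (red_same _ _ _ _ rPt) => //.
  by rewrite !size_cat h4 /= addnS.
Qed.

Lemma all2_zip k (w wt : seq int) : size w = size wt ->
  (forall i : nat, (i < size w)%N -> dd (nth 0 w i) (nth 0 wt i)) ->
  all2 pd (zip (iota k (size w)) w) (zip (iota k (size wt)) wt).
Proof.
elim: w wt k => [|a w IH] [|b wt] k //= [hs] h.
rewrite /pd /= eqxx (h 0%N) //=.
apply: IH => // i hi.
exact: (h i.+1).
Qed.

Theorem proposition5p15 (n : nat) (w wt : seq int) :
  size w = n -> size wt = n ->
  reduced_word w -> reduced_word wt ->
  (forall i : nat, (i < n)%N ->
     (nth 0 wt i - nth 0 w i == 0) || (nth 0 wt i - nth 0 w i == 1)) ->
  Q_EG w = Q_EG wt.
Proof.
move=> hw hwt rw rwt h.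
rewrite /Q_EG; apply: main_gen => //.
- apply: all2_zip; first by rewrite hw hwt.
  by move=> i hi; apply: h; rewrite -hw.
- by rewrite /= unzip2_zip // size_iota.
- by rewrite /= unzip2_zip // size_iota.
Qed.
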